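(* Let $\alpha\in\mathbb C$, $k\in\mathbb N$, $P_k:=\mathbb C[\rho,\varepsilon]/(\varepsilon^k)$, and define $T_{(\alpha,k)}:R\to P_k$ by $T_{(\alpha,k)}(f)=\sum_{i=0}^{k-1}f^{(i)}_\alpha\,\frac{\varepsilon^i}{i!}$. Then: (1) $T_{(\alpha,k)}$ is a $\mathbb C$-algebra homomorphism and $\ker T_{(\alpha,k)}=(l_\alpha^k)$; (2) the induced injective algebra homomorphism $\tau:R/(l_\alpha^k)\to P_k$ induces an isomorphism between the total rings of fractions of $R/(l_\alpha^k)$ and of $P_k$.
   Context: $R=\mathbb C[z_1,z_2]$, identified via polar coordinates $z_1=\rho\cos\varphi$, $z_2=\rho\sin\varphi$ with the subalgebra $\mathbb C[\rho\cos\varphi,\rho\sin\varphi]$ of analytic functions in $(\rho,\varphi)\in\mathbb C^2$. For $f\in R$, $\alpha\in\mathbb C$, $i\in\mathbb N_0$, let $f^{(i)}_\alpha:=\frac{\partial^i f}{\partial\varphi^i}\big|_{\varphi=\alpha}\in\mathbb C[\rho]$. Put $l_\alpha=-\sin(\alpha)z_1+\cos(\alpha)z_2=\rho\sin(\varphi-\alpha)$. *)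

(* Defs.v *)
From HB Require Import structures.
From mathcomp Require Import all_boot all_order all_algebra.
From mathcomp Require Import reals.
From mathcomp.real_closed Require Import complex.
From mathcomp Require Import mpoly.

Set Implicit Arguments.
Unset Strict Implicit.
Unset Printing Implicit Defensive.

Import GRing.Theory.
Local Open Scope ring_scope.

Section Defs.
Variable R : realType.
Local Notation C := (R[i]).

Definition Rpol := {mpoly C[2]}.
Definition z1 : Rpol := 'X_(ord0 : 'I_2).
Definition z2 : Rpol := 'X_(ord_max : 'I_2).

(* The derivation d/dphi on C[rho cos phi, rho sin phi] = C[z1, z2]:
   by the chain rule, d/dphi f(rho cos phi, rho sin phi)
     = - (rho sin phi) * (d_1 f) + (rho cos phi) * (d_2 f),
   i.e. dphi f = - z2 * df/dz1 + z1 * df/dz2 (again an element of C[z1,z2]). *)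
Definition dphi (f : Rpol) : Rpol :=
  - z2 * mderiv (ord0 : 'I_2) f + z1 * mderiv (ord_max : 'I_2) f.

(* Evaluation at phi = alpha, where (c, s) = (cos alpha, sin alpha):
   z1 = rho cos phi |-> c * rho,  z2 = rho sin phi |-> s * rho,
   giving an element of C[rho] = {poly C}. *)
Definition eval_phi (c s : C) (f : Rpol) : {poly C} :=
  mmap (@polyC C) (fun i : 'I_2 => if val i == 0%N then c *: 'X else s *: 'X) f.

Definition fder (c s : C) (i : nat) (f : Rpol) : {poly C} :=
  eval_phi c s (iter i dphi f).

(* l_alpha = - sin(alpha) z1 + cos(alpha) z2 = rho sin(phi - alpha). *)
Definition lalpha (c s : C) : Rpol := - (s *: z1) + c *: z2.

(* P_k = C[rho, eps]/(eps^k) = C[rho][eps]/(eps^k) : the outer polynomial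
   variable 'X is eps, the coefficients are in C[rho]. *)
Definition Pk (k : nat) := {poly %/ ('X^k : {poly {poly C}})}.

Definition Tak (c s : C) (k : nat) (f : Rpol) : Pk k :=
  in_qpoly ('X^k : {poly {poly C}})
    (\sum_(i < k) ((i`!%:R : C)^-1 *: fder c s i f)%:P * 'X^i).

End Defs.

Section Frac.
Variables (A B : comNzRingType).

Definition nzdiv (b : B) : Prop := forall x : B, x * b = 0 -> x = 0.

(* The class of s is a non-zero-divisor in A/(g). *)
Definition nzdiv_mod (g s : A) : Prop :=
  forall x : A, (exists q, x * s = q * g) -> exists q, x = q * g.

(* Let tau : A/(g) -> B be induced by tau0 : A -> B (which vanishes on (g)).
   tau induces an isomorphism of total rings of fractions
   Q(A/(g)) -> Q(B), a/s |-> tau(a)/tau(s), meaning: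
   (i)  tau maps non-zero-divisors to non-zero-divisors (so the map
        a/s |-> tau(a)/tau(s) is defined);
   (ii) it is injective: tau(a)/tau(s) = tau(a')/tau(s') implies
        a/s = a'/s' in Q(A/(g)), i.e. a s' = a' s mod (g);
   (iii) it is surjective: every b/t (t a non-zero-divisor of B) equals
        tau(a)/tau(s) for some a and non-zero-divisor s of A/(g).
   (It is automatically a ring homomorphism.) *)
Definition induces_frac_iso (g : A) (tau0 : A -> B) : Prop :=
  [/\ (forall s, nzdiv_mod g s -> nzdiv (tau0 s)),
      (forall a s a' s', nzdiv_mod g s -> nzdiv_mod g s' ->
          tau0 a * tau0 s' = tau0 a' * tau0 s ->
          exists q, a * s' - a' * s = q * g)
    & (forall b t : B, nzdiv t ->
          exists a s, nzdiv_mod g s /\ b * tau0 s = t * tau0 a)].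

End Frac.

(* Main.v *)
Require Import Defs.
From HB Require Import structures.
From mathcomp Require Import all_boot all_order all_algebra.
From mathcomp Require Import reals.
From mathcomp.real_closed Require Import complex.
From mathcomp Require Import mpoly.
From mathcomp Require Import ring lra zify.
Import GRing.Theory Num.Theory.
Set Implicit Arguments.
Unset Strict Implicit.
Unset Printing Implicit Defensive.
Local Open Scope ring_scope.


Section S.
Variable R : realType.
Local Notation C := (R[i]).
Local Notation A := (Rpol R).
Variables c s : C.

Lemma dphiD (f g : A) : dphi (f + g) = dphi f + dphi g.
Proof. by rewrite /dphi !mderivD; ring. Qed.
Lemma dphi0 : dphi (0 : A) = 0.
Proof. by rewrite /dphi !mderiv0 !mulr0 addr0. Qed.
Lemma dphiM (f g : A) : dphi (f * g) = dphi f * g + f * dphi g.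
Proof. by rewrite /dphi !mderivM; ring. Qed.
Lemma dphiZ (a : C) (f : A) : dphi (a *: f) = a *: dphi f.
Proof. by rewrite /dphi !mderivZ scalerDr !scalerAr. Qed.
Lemma dphiC (a : C) : dphi (a%:MP : A) = 0.
Proof. by rewrite /dphi !mderivC !mulr0 addr0. Qed.

Lemma eval_phiE (f : A) : eval_phi c s f = mmap (@polyC C) (fun i : 'I_2 => if val i == 0%N then c *: 'X else s *: 'X) f.
Proof. by []. Qed.
Lemma evD (f g : A) : eval_phi c s (f + g) = eval_phi c s f + eval_phi c s g.
Proof. by rewrite !eval_phiE rmorphD. Qed.
Lemma ev0 : eval_phi c s 0 = 0.
Proof. by rewrite !eval_phiE rmorph0. Qed.
Lemma ev_sum (I : Type) (r : seq I) (P : pred I) (F : I -> A) :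
  eval_phi c s (\sum_(i <- r | P i) F i) = \sum_(i <- r | P i) eval_phi c s (F i).
Proof. by apply: (big_morph (eval_phi c s)); [exact: evD | exact: ev0]. Qed.
Lemma evN (f : A) : eval_phi c s (- f) = - eval_phi c s f.
Proof. by rewrite !eval_phiE rmorphN. Qed.
Lemma evM (f g : A) : eval_phi c s (f * g) = eval_phi c s f * eval_phi c s g.
Proof. by rewrite !eval_phiE rmorphM. Qed.
Lemma evZ a (f : A) : eval_phi c s (a *: f) = a *: eval_phi c s f.
Proof. by rewrite !eval_phiE mmapZ mul_polyC. Qed.
Lemma evC a : eval_phi c s (a%:MP) = a%:P.
Proof. by rewrite !eval_phiE mmapC. Qed.
Lemma ev1 : eval_phi c s 1 = 1.
Proof. by rewrite !eval_phiE rmorph1. Qed.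
Lemma evz1 : eval_phi c s (z1 R) = c *: 'X.
Proof. by rewrite eval_phiE /z1 mmapX mmap1U. Qed.
Lemma evz2 : eval_phi c s (z2 R) = s *: 'X.
Proof. by rewrite eval_phiE /z2 mmapX mmap1U. Qed.

Lemma dphi_sum (I : Type) (r : seq I) (P : pred I) (F : I -> A) :
  dphi (\sum_(i <- r | P i) F i) = \sum_(i <- r | P i) dphi (F i).
Proof. by apply: (big_morph (@dphi R)); [exact: dphiD | exact: dphi0]. Qed.

Fixpoint bn (n : nat) (f : A) : A :=
  if n is m.+1 then (m.+1%:R : C)^-1 *: dphi (bn m f) else f.

Lemma natC_neq0 n : (n.+1%:R : C) != 0.
Proof. by rewrite pnatr_eq0. Qed.

Lemma bnE n f : bn n f = (n`!%:R : C)^-1 *: iter n (@dphi R) f.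
Proof.
elim: n => [|n IH] /=; first by rewrite fact0 invr1 scale1r.
by rewrite IH dphiZ scalerA factS natrM invfM.
Qed.

Lemma D_bn n f : dphi (bn n f) = (n.+1%:R : C) *: bn n.+1 f.
Proof. by rewrite /= scalerA mulfV ?natC_neq0 // scale1r. Qed.

Lemma bnM n f g : bn n (f * g) = \sum_(i < n.+1) bn i f * bn (n - i) g.
Proof.
elim: n => [|n IH]; first by rewrite big_ord1.
rewrite [LHS]/= IH dphi_sum.
apply: (@scalerI _ _ (n.+1%:R : C)); first exact: natC_neq0.
rewrite scalerA mulfV ?natC_neq0 // scale1r.
rewrite (eq_bigr (fun i : 'I_n.+1 => (i.+1%:R : C) *: (bn i.+1 f * bn (n - i) g)
   + ((n.+1 - i)%:R : C) *: (bn i f * bn (n.+1 - i) g))); last first.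
  move=> i _; rewrite dphiM !D_bn -scalerAl -scalerAr subSn //.
  by rewrite -ltnS.
rewrite big_split /= scaler_sumr.
rewrite (eq_bigr (fun i : 'I_n.+2 => (i%:R : C) *: (bn i f * bn (n.+1 - i) g)
   + ((n.+1 - i)%:R : C) *: (bn i f * bn (n.+1 - i) g))); last first.
  by move=> i _; rewrite -scalerDl -natrD subnKC // -ltnS.
rewrite big_split /=; congr (_ + _).
  rewrite [in RHS]big_ord_recl scale0r add0r.
  by apply: eq_bigr => i _; rewrite /bump /= subSS.
rewrite [in RHS]big_ord_recr /= subnn scale0r addr0.
by apply: eq_bigr.
Qed.

Lemma dphiN (f : A) : dphi (- f) = - dphi f.
Proof. by rewrite /dphi !mderivN; ring. Qed.

Lemma mderivXU (i j : 'I_2) : mderiv i ('X_j : A) = (j == i)%:R.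
Proof.
rewrite mderivX mnm1E; case: eqP => [->|_]; last by rewrite scale0r.
by rewrite -{1}[U_(i)%MM]add0m addmK mpolyX0 scale1r.
Qed.

Lemma dphiz1 : dphi (z1 R) = - z2 R.
Proof. by rewrite /dphi /z1 !mderivXU /= mulr1 mulr0 addr0. Qed.
Lemma dphiz2 : dphi (z2 R) = z1 R.
Proof. by rewrite /dphi /z2 !mderivXU /= mulr1 mulr0 add0r. Qed.

Definition uu : A := c *: z1 R + s *: z2 R.

Lemma dphil : dphi (lalpha c s) = uu.
Proof. by rewrite /lalpha /uu dphiD dphiN !dphiZ dphiz1 dphiz2 scalerN opprK addrC. Qed.
Lemma dphiu : dphi uu = - lalpha c s.
Proof. by rewrite /lalpha /uu dphiD !dphiZ dphiz1 dphiz2 scalerN opprD opprK addrC. Qed.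
Lemma evl : eval_phi c s (lalpha c s) = 0.
Proof. by rewrite /lalpha evD evN !evZ evz1 evz2 !scalerA mulrC addNr. Qed.
Hypothesis hcs : c ^+ 2 + s ^+ 2 = 1.
Lemma evu : eval_phi c s uu = 'X.
Proof. by rewrite /uu evD !evZ evz1 evz2 !scalerA -scalerDl -!expr2 hcs scale1r. Qed.
End S.



Section P.
Variable R : realType.
Local Notation C := (R[i]).
Variable k : nat.
Hypothesis hk : (0 < k)%N.
Local Notation P := (Pk R k).

Lemma mkX : mk_monic ('X^k : {poly {poly C}}) = 'X^k.
Proof. by rewrite mk_monic_Xn prednK. Qed.

Lemma Pk_size (x : P) : (size (x : {poly {poly C}}) <= k)%N.
Proof. by apply: leq_trans (size_npoly x) _; rewrite mkX size_polyXn. Qed.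

Lemma Pk_big (x : P) n : (k <= n)%N -> (x : {poly {poly C}})`_n = 0.
Proof. by move=> kn; apply: nth_default; apply: leq_trans (Pk_size x) kn. Qed.

Lemma Pk_inj (x y : P) : (forall n, (n < k)%N -> (x : {poly {poly C}})`_n = (y : {poly {poly C}})`_n) -> x = y.
Proof.
move=> H; apply: val_inj; apply/polyP => n /=.
case: (ltnP n k) => [/H //|kn]; by rewrite !Pk_big.
Qed.

Lemma in_qpolyE (p : {poly {poly C}}) n :
  (in_qpoly ('X^k : {poly {poly C}}) p : {poly {poly C}})`_n = if (n < k)%N then p`_n else 0.
Proof.
rewrite /= mkX -Pdiv.RingMonic.take_poly_rmodp ?monicXn //.
by rewrite coef_take_poly.
Qed.

Lemma PkD (x y : P) n : ((x + y : P) : {poly {poly C}})`_n = (x : {poly {poly C}})`_n + (y : {poly {poly C}})`_n.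
Proof. by rewrite -coefD. Qed.

Lemma PkM (x y : P) n : ((x * y : P) : {poly {poly C}})`_n =
  if (n < k)%N then \sum_(i < n.+1) (x : {poly {poly C}})`_i * (y : {poly {poly C}})`_(n - i) else 0.
Proof. by rewrite -coefM -in_qpolyE. Qed.

Lemma Pk1 n : ((1 : P) : {poly {poly C}})`_n = (n == 0%N)%:R.
Proof.
rewrite -(in_qpoly1 ('X^k : {poly {poly C}})) in_qpolyE coefC.
by case: n => [|n]; rewrite ?hk //; case: ifP.
Qed.

Lemma PkZ (a : {poly C}) (x : P) n : ((a *: x : P) : {poly {poly C}})`_n = a * (x : {poly {poly C}})`_n.
Proof. by rewrite poly_of_qpolyZ coefZ. Qed.
End P.


Section T.
Variable R : realType.
Local Notation C := (R[i]).
Local Notation A := (Rpol R).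
Variables c s : C.
Variable k : nat.
Hypothesis hk : (0 < k)%N.
Local Notation P := (Pk R k).
Local Notation ev := (eval_phi c s).
Definition an n (f : A) := ev (bn n f).

Lemma TakE (f : A) n : ((Tak c s k f : P) : {poly {poly C}})`_n = if (n < k)%N then an n f else 0.
Proof.
rewrite /Tak in_qpolyE //.
have -> : \sum_(i < k) ((i`!%:R : C)^-1 *: fder c s i f)%:P * 'X^i = \poly_(i < k) an i f.
  by rewrite poly_def; apply: eq_bigr => i _; rewrite mul_polyC /an bnE evZ.
by rewrite coef_poly; case: (n < k)%N.
Qed.

Lemma anM n f g : an n (f * g) = \sum_(i < n.+1) an i f * an (n - i) g.
Proof. by rewrite /an bnM ev_sum; apply: eq_bigr => i _; rewrite evM. Qed.
End T.


Section K.
Variable R : realType.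
Local Notation C := (R[i]).
Local Notation A := (Rpol R).
Variables c s : C.
Hypothesis hcs : c ^+ 2 + s ^+ 2 = 1.
Local Notation ev := (eval_phi c s).
Local Notation l := (lalpha c s).
Local Notation u := (uu c s).

Definition EE (r : {poly C}) : A := (map_poly (@mpolyC 2 C) r).[u].

Lemma EED p q : EE (p + q) = EE p + EE q.
Proof. by rewrite /EE rmorphD hornerD. Qed.
Lemma EEM p q : EE (p * q) = EE p * EE q.
Proof. by rewrite /EE rmorphM hornerM. Qed.
Lemma EEC a : EE a%:P = a%:MP.
Proof. by rewrite /EE map_polyC hornerC. Qed.
Lemma EEX : EE 'X = u.
Proof. by rewrite /EE map_polyX hornerX. Qed.
Lemma EEZ a p : EE (a *: p) = a *: EE p.
Proof. by rewrite -mul_polyC EEM EEC mul_mpolyC. Qed.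

Lemma evEE r : ev (EE r) = r.
Proof.
elim/poly_ind: r => [|r a IH].
  by rewrite /EE rmorph0 horner0 ev0.
by rewrite EED EEM EEX EEC evD evM IH evu // evC.
Qed.

Definition Cg (f : A) := exists r h, f = EE r + l * h.

Lemma CgE r : Cg (EE r).
Proof. by exists r, 0; rewrite mulr0 addr0. Qed.
Lemma CgD f g : Cg f -> Cg g -> Cg (f + g).
Proof.
move=> [r [h ->]] [r' [h' ->]]; exists (r + r'), (h + h').
by rewrite EED; ring.
Qed.
Lemma CgM f g : Cg f -> Cg g -> Cg (f * g).
Proof.
move=> [r [h ->]] [r' [h' ->]]; exists (r * r'), (h * EE r' + EE r * h' + l * h * h').
by rewrite EEM; ring.
Qed.
Lemma CgZ a f : Cg f -> Cg (a *: f).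
Proof.
move=> [r [h ->]]; exists (a *: r), (a *: h).
by rewrite EEZ scalerDr scalerAr.
Qed.
Lemma CgX f n : Cg f -> Cg (f ^+ n).
Proof.
move=> Hf; elim: n => [|n IH]; first by rewrite expr0 -mpolyC1 -(EEC 1); apply: CgE.
by rewrite exprS; apply: CgM.
Qed.

Lemma Cgz1 : Cg (z1 R).
Proof.
exists (c *: 'X), (- s%:MP).
rewrite EEZ EEX /uu /lalpha -!mul_mpolyC.
have e : ((c%:MP) ^+ 2 + (s%:MP) ^+ 2 : A) = 1.
  by rewrite -!rmorphXn -rmorphD /= hcs.
rewrite -{1}[z1 R]mul1r -e; ring.
Qed.
Lemma Cgz2 : Cg (z2 R).
Proof.
exists (s *: 'X), (c%:MP).
rewrite EEZ EEX /uu /lalpha -!mul_mpolyC.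
have e : ((c%:MP) ^+ 2 + (s%:MP) ^+ 2 : A) = 1.
  by rewrite -!rmorphXn -rmorphD /= hcs.
rewrite -{1}[z2 R]mul1r -e; ring.
Qed.

Lemma Cg_all f : Cg f.
Proof.
elim/mpolyind: f => [|a m p _ _ IH].
  by rewrite -mpolyC0 -(EEC 0); apply: CgE.
apply: CgD => //; apply: CgZ.
rewrite mpolyXE_id big_ord_recr big_ord1 /=.
apply: CgM; apply: CgX; [exact: Cgz1| exact: Cgz2].
Qed.

Lemma ker_ev f : ev f = 0 -> exists h, f = l * h.
Proof.
have [r [h ->]] := Cg_all f.
rewrite evD evM evl mul0r addr0 evEE => ->.
by exists h; rewrite /EE rmorph0 horner0 add0r.
Qed.
End K.


Section E.
Variable R : realType.
Local Notation C := (R[i]).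
Local Notation A := (Rpol R).
Variables c s : C.
Hypothesis hcs : c ^+ 2 + s ^+ 2 = 1.
Local Notation ev := (eval_phi c s).
Local Notation l := (lalpha c s).
Local Notation u := (uu c s).
Local Notation an := (an c s).

Lemma bnD n (f g : A) : bn n (f + g) = bn n f + bn n g.
Proof. by elim: n => [|n IH] //=; rewrite IH dphiD scalerDr. Qed.
Lemma bnZ n a (f : A) : bn n (a *: f) = a *: bn n f.
Proof. by elim: n => [|n IH] //=; rewrite IH dphiZ !scalerA mulrC. Qed.
Lemma bn1 n : bn n (1 : A) = (n == 0%N)%:R.
Proof.
case: n => [|n] //=; elim: n => [|n IH] /=.
  by rewrite -mpolyC1 dphiC scaler0.
by rewrite IH dphi0 scaler0.
Qed.

Lemma anD n f g : an n (f + g) = an n f + an n g.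
Proof. by rewrite /an bnD evD. Qed.
Lemma anZ n a f : an n (a *: f) = a%:P * an n f.
Proof. by rewrite /an bnZ evZ mul_polyC. Qed.
Lemma an1 n : an n 1 = (n == 0%N)%:R.
Proof. by rewrite /an bn1; case: (n == 0%N); rewrite ?ev1 ?ev0. Qed.
Lemma an_0 f : an 0 f = ev f.
Proof. by []. Qed.
Lemma an_1 f : an 1 f = ev (dphi f).
Proof. by rewrite /an /= invr1 scale1r. Qed.
Lemma an0l : an 0 l = 0.
Proof. exact: evl. Qed.
Lemma an1l : an 1 l = 'X.
Proof. by rewrite an_1 dphil evu. Qed.

Lemma ker_an m f : (forall i, (i < m)%N -> an i f = 0) -> exists q, f = q * l ^+ m.
Proof.
elim: m f => [|m IH] f H; first by exists f; rewrite expr0 mulr1.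
have [h fE] := @ker_ev _ c s hcs f (H 0%N isT); subst f.
have Hh : forall n j, (j < n)%N -> (j < m)%N -> an j h = 0.
  elim=> [//|n IHn] j; rewrite ltnS leq_eqVlt => /orP [/eqP -> nm|jn jm]; last exact: IHn.
  have := H n.+1 nm; rewrite anM big_ord_recl big_ord_recl /= an0l mul0r add0r.
  rewrite big1 ?addr0; last first.
    move=> i _; rewrite /bump /= (IHn (n.+1 - (1 + (1 + i)))%N) ?mulr0 //.
      by have := ltn_ord i; lia.
    by have := ltn_ord i; lia.
  by rewrite an1l subn1 /= => /eqP; rewrite mulf_eq0 polyX_eq0 /= => /eqP.
have [q ->] := IH h (fun j jm => Hh j.+1 j (ltnSn j) jm).
by exists q; rewrite exprS; ring.
Qed.

Variable k : nat.
Hypothesis hk : (0 < k)%N.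
Local Notation P := (Pk R k).
Local Notation T := (Tak c s k).
Local Notation cf x n := ((x : {poly {poly C}})`_n).

Lemma TakD f g : T (f + g) = T f + T g.
Proof. by apply: Pk_inj => // n hn; rewrite PkD !TakE // hn anD. Qed.
Lemma TakM f g : T (f * g) = T f * T g.
Proof.
apply: Pk_inj => // n hn; rewrite PkM // !TakE // hn anM.
apply: eq_bigr => i _; rewrite !TakE //.
have hi : (i < k)%N by apply: leq_ltn_trans hn; rewrite -ltnS.
have hi' : (n - i < k)%N by apply: leq_ltn_trans hn; rewrite leq_subr.
by rewrite hi hi'.
Qed.
Lemma Tak1 : T 1 = 1.
Proof. by apply: Pk_inj => // n hn; rewrite Pk1 // TakE // hn an1. Qed.
Lemma TakZ a f : T (a *: f) = a%:P *: T f.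
Proof. by apply: Pk_inj => // n hn; rewrite PkZ // !TakE // hn anZ. Qed.
Lemma TakX f m : T (f ^+ m) = T f ^+ m.
Proof. by elim: m => [|m IH]; rewrite ?expr0 ?Tak1 // !exprS TakM IH. Qed.

Lemma PkM_low (x y : P) j m : (forall n, (n < j)%N -> cf x n = 0) ->
  (forall n, (n < m)%N -> cf y n = 0) -> forall n, (n < j + m)%N -> cf (x * y) n = 0.
Proof.
move=> Hx Hy n hn; rewrite PkM //; case: ifP => // _.
apply: big1 => i _; case: (ltnP i j) => ij; first by rewrite Hx ?mul0r.
by rewrite Hy ?mulr0 //; have := ltn_ord i; lia.
Qed.

Lemma PkM_lead (x y : P) j m : (forall n, (n < j)%N -> cf x n = 0) ->
  (forall n, (n < m)%N -> cf y n = 0) -> (j + m < k)%N -> cf (x * y) (j + m) = cf x j * cf y m.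
Proof.
move=> Hx Hy hn; rewrite PkM // hn.
have hj : (j < (j + m).+1)%N by lia.
rewrite (bigD1 (Ordinal hj)) //= big1 ?addr0; first by rewrite addKn.
move=> i /eqP neq; case: (ltngtP i j) => ij; first by rewrite Hx ?mul0r.
  by rewrite Hy ?mulr0 //; have := ltn_ord i; lia.
by case: neq; apply: val_inj.
Qed.

Lemma Tak0 f : cf (T f) 0 = ev f.
Proof. by rewrite TakE // hk. Qed.

Lemma Tl_low : forall n, (n < 1)%N -> cf (T l) n = 0.
Proof. by move=> n; rewrite ltnS leqn0 => /eqP ->; rewrite Tak0 evl. Qed.

Lemma Tlm_low (m : nat) : forall n, (n < m)%N -> cf (T (l ^+ m)) n = 0.
Proof.
elim: m => [//|m IH1].
rewrite exprSr TakM.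
by move=> n hn; apply: (PkM_low IH1 Tl_low); rewrite addn1.
Qed.

Lemma Tlm_lead (m : nat) : (m < k)%N -> cf (T (l ^+ m)) m = 'X ^+ m.
Proof.
elim: m => [|m IH2]; first by move=> _; rewrite expr0 Tak1 Pk1.
move=> hm; rewrite exprSr TakM.
have := PkM_lead (@Tlm_low m) Tl_low; rewrite addn1 => -> //.
rewrite IH2 ?TakE ?an1l ?exprSr; last by lia.
  by have -> : (1 < k)%N by lia.
exact: hk.
Qed.

Lemma Tlk : T (l ^+ k) = 0.
Proof.
apply: Pk_inj => // n hn; rewrite Tlm_low //.
by rewrite -(in_qpoly0 ('X^k : {poly {poly C}})) in_qpolyE // coef0 if_same.
Qed.

Lemma ker_T f : T f = 0 <-> exists q, f = q * l ^+ k.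
Proof.
split=> [Hf|[q ->]]; last by rewrite TakM Tlk mulr0.
apply: ker_an => i hi; have := TakE c s hk f i.
by rewrite Hf hi -(in_qpoly0 ('X^k : {poly {poly C}})) in_qpolyE // coef0 if_same.
Qed.
End E.



Section F.
Variable R : realType.
Local Notation C := (R[i]).
Local Notation A := (Rpol R).
Variables c s : C.
Hypothesis hcs : c ^+ 2 + s ^+ 2 = 1.
Local Notation ev := (eval_phi c s).
Local Notation l := (lalpha c s).
Local Notation u := (uu c s).
Local Notation an := (an c s).

Lemma l_neq0 : l != 0.
Proof.
apply/eqP => l0; have := an1l hcs; rewrite l0 an_1 dphi0 ev0 => /eqP.
by rewrite eq_sym polyX_eq0.
Qed.

Lemma ev_nzdiv m (s0 : A) : ev s0 != 0 -> nzdiv_mod (l ^+ m) s0.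
Proof.
move=> hs; elim: m => [|m IH] x [q hq]; first by exists x; rewrite expr0 mulr1.
have : ev x = 0.
  move/(congr1 ev): hq; rewrite !evM exprS evM evl mul0r mulr0 => /eqP.
  by rewrite mulf_eq0 (negbTE hs) orbF => /eqP.
move=> /(@ker_ev _ c s hcs) [x' xE]; subst x.
have : x' * s0 = q * l ^+ m.
  apply: (mulfI l_neq0); rewrite mulrA hq exprSr; ring.
by move=> /(fun h => IH x' (ex_intro _ q h)) [q' ->]; exists q'; rewrite exprS; ring.
Qed.

Variable k : nat.
Hypothesis hk : (0 < k)%N.
Local Notation P := (Pk R k).
Local Notation T := (Tak c s k).
Local Notation cf x n := ((x : {poly {poly C}})`_n).

Lemma nzdiv_ev (s0 : A) : nzdiv_mod (l ^+ k) s0 -> ev s0 != 0.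
Proof.
move=> H; apply/eqP => /(@ker_ev _ c s hcs) [h hE].
have [q hq] : exists q, l ^+ k.-1 = q * l ^+ k.
  apply: H; exists h; rewrite hE -[k in RHS](prednK hk) exprS; move: (l ^+ k.-1) => L; ring.
have : 1 = q * l.
  apply: (mulIf (expf_neq0 k.-1 l_neq0)); rewrite mul1r [LHS]hq -[k in LHS](prednK hk) exprS; move: (l ^+ k.-1) => L; ring.
move/(congr1 ev); rewrite ev1 evM evl mulr0 => /eqP; by rewrite oner_eq0.
Qed.

Lemma Pk0 n : cf (0 : P) n = 0.
Proof. by rewrite -(in_qpoly0 ('X^k : {poly {poly C}})) in_qpolyE // coef0 if_same. Qed.
Lemma PkB (x y : P) n : cf (x - y) n = cf x n - cf y n.
Proof. by rewrite -coefB. Qed.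
Lemma Tak_0 : T 0 = 0.
Proof. by rewrite -(scale0r (0 : A)) TakZ // polyC0 scale0r. Qed.
Lemma TakB f g : T (f - g) = T f - T g.
Proof. by have := TakD c s hk (f - g) g; rewrite subrK => ->; rewrite addrK. Qed.

Lemma Pk_nzdiv (t : P) : cf t 0 != 0 -> nzdiv t.
Proof.
move=> hs x hx; apply: Pk_inj => // n hn; rewrite Pk0.
elim: n {-2}n (leqnn n) hn => [|n IH] j.
  rewrite leqn0 => /eqP -> h0; have : cf (x * t) 0 = 0 by rewrite hx Pk0.
  by rewrite PkM // h0 big_ord1 => /eqP; rewrite mulf_eq0 (negbTE hs) orbF => /eqP.
rewrite leq_eqVlt => /orP [/eqP ->|]; last by rewrite ltnS; apply: IH.
move=> hn; have : cf (x * t) n.+1 = 0 by rewrite hx Pk0.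
rewrite PkM // hn big_ord_recr /= big1 ?add0r; last first.
  by move=> i _; have hi := ltn_ord i; rewrite IH ?mul0r //; lia.
by rewrite subnn => /eqP; rewrite mulf_eq0 (negbTE hs) orbF => /eqP.
Qed.

Lemma T_nzdiv (s0 : A) : ev s0 != 0 -> nzdiv (T s0).
Proof. by move=> hs; apply: Pk_nzdiv; rewrite Tak0. Qed.

Lemma evX (f : A) m : ev (f ^+ m) = ev f ^+ m.
Proof. by rewrite eval_phiE rmorphXn. Qed.

Lemma Pk_lowM (x y : P) j : (forall n, (n < j)%N -> cf x n = 0) ->
  forall n, (n < j)%N -> cf (x * y) n = 0.
Proof. by move=> hx n hn; apply: (PkM_low hk hx (m := 0)) => //; rewrite addn0. Qed.
Lemma Pk_leadM (x y : P) j : (forall n, (n < j)%N -> cf x n = 0) -> (j < k)%N ->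
  cf (x * y) j = cf x j * cf y 0.
Proof. by move=> hx hj; have := PkM_lead hk hx (m := 0) (y := y); rewrite addn0 => ->. Qed.

Lemma Tlg_lead j g : (j < k)%N -> cf (T (l ^+ j * g)) j = 'X ^+ j * ev g.
Proof.
move=> jk; rewrite TakM //.
have := Pk_leadM (T g) (Tlm_low c s hk (m := j)) jk.
move=> ->.
by rewrite Tlm_lead // Tak0.
Qed.
Lemma Tlg_low j g n : (n < j)%N -> cf (T (l ^+ j * g)) n = 0.
Proof.
move=> nj; rewrite TakM //.
exact: (Pk_lowM (T g) (Tlm_low c s hk (m := j))).
Qed.

Definition good (p : P) := exists a s0, ev s0 != 0 /\ p * T s0 = T a.

Lemma good_ord d : forall j, (j + d = k)%N -> forall p : P,
  (forall n, (n < j)%N -> cf p n = 0) -> good p.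
Proof.
elim: d => [|d IH] j hj p hp.
  have -> : p = 0 by apply: Pk_inj => // n hn; rewrite Pk0 hp //; lia.
  by exists 0, 1; rewrite ev1 oner_neq0 mul0r Tak_0.
have jk : (j < k)%N by lia.
pose r := cf p j; pose s1 := u ^+ j; pose a1 := l ^+ j * EE c s r.
pose w := p * T s1 - T a1.
have hw : forall n, (n < j.+1)%N -> cf w n = 0.
  move=> n; rewrite ltnS leq_eqVlt => /orP [/eqP ->|hn].
    rewrite /w PkB (Pk_leadM _ hp jk) /a1 Tlg_lead // Tak0 // evX evu // evEE //.
    by rewrite mulrC subrr.
  by rewrite /w PkB (Pk_lowM _ hp) // /a1 Tlg_low // subrr.
have hj1 : (j.+1 + d = k)%N by lia.
have [a2 [s2 [hs2 e2]]] := IH j.+1 hj1 w hw.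
exists (a2 + a1 * s2), (s1 * s2); split.
  by rewrite evM mulf_neq0 // /s1 evX evu // expf_neq0 // polyX_eq0.
have e : p * T s1 = w + T a1 by rewrite /w subrK.
by rewrite TakM // mulrA e mulrDl e2 TakD // TakM.
Qed.

Lemma good_all (p : P) : good p.
Proof. by apply: (@good_ord k 0%N) => //; rewrite add0n. Qed.
End F.


Lemma t0_neq0 (R : realType) k (hk : (0 < k)%N) (t : Pk R k) : nzdiv t ->
  ((t : {poly {poly R[i]}})`_0) != 0.
Proof.
move=> ht; apply/eqP => t0.
pose x : Pk R k := in_qpoly ('X^k : {poly {poly R[i]}}) 'X^(k.-1).
have hx : forall n, (n < k.-1)%N -> ((x : {poly {poly R[i]}})`_n) = 0.
  by move=> n hn; rewrite /x in_qpolyE // coefXn; case: ifP => //; rewrite (ltn_eqF hn).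
have : x * t = 0.
  apply: Pk_inj => // n hn; rewrite Pk0 //.
  apply: (PkM_low hk hx (m := 1)) => //; last by rewrite addn1 prednK.
  by move=> m; rewrite ltnS leqn0 => /eqP ->.
move=> /ht /(congr1 (fun y : Pk R k => (y : {poly {poly R[i]}})`_(k.-1))).
have hk1 : (k.-1 < k)%N by lia.
rewrite Pk0 // /x in_qpolyE // coefXn eqxx hk1 => /eqP.
by rewrite oner_eq0.
Qed.

Theorem lemma2p11 (R : realType) (c s : R[i]) (k : nat) :
  c ^+ 2 + s ^+ 2 = 1 -> (0 < k)%N ->
  ((forall f g : Rpol R, Tak c s k (f + g) = Tak c s k f + Tak c s k g) /\
   (forall f g : Rpol R, Tak c s k (f * g) = Tak c s k f * Tak c s k g) /\
   Tak c s k 1 = 1 /\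
   (forall (a : R[i]) (f : Rpol R), Tak c s k (a *: f) = a%:P *: Tak c s k f) /\
   (forall f : Rpol R,
      Tak c s k f = 0 <-> exists q : Rpol R, f = q * lalpha c s ^+ k)) /\
  induces_frac_iso (lalpha c s ^+ k) (Tak c s k).
Proof.
move=> hcs hk; split.
  split; first exact: TakD.
  split; first exact: TakM.
  split; first exact: Tak1.
  split; first exact: TakZ.
  exact: ker_T.
split.
- by move=> s0 H; apply: T_nzdiv => //; apply: (nzdiv_ev hcs hk).
- move=> a s0 a' s0' _ _ e; apply/(ker_T hcs hk).
  by rewrite TakB // !TakM // e subrr.
- move=> b t ht.
  have [a1 [s1 [hs1 e1]]] := good_all hcs hk b.
  have [a2 [s2 [hs2 e2]]] := good_all hcs hk t.
  have ha2 : eval_phi c s a2 != 0.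
    rewrite -(Tak0 c s hk) -e2 (Pk_leadM hk _ (x := t) (j := 0)) //.
    by rewrite mulf_neq0 ?Tak0 // t0_neq0.
  exists (a1 * s2), (s1 * a2); split.
    by apply: ev_nzdiv => //; rewrite evM mulf_neq0.
  by rewrite !TakM // mulrA e1 -e2 mulrCA.
Qed.
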